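(* Let $\mathbf{P}=(X,P)$ be a CPT poset and let $M$ be a strong module of $\mathbf{P}$. If there exists a CPT representation $\{W_x\}_{x\in X}$ of $\mathbf{P}$ in which some element $x\in M$ is represented by a trivial path (a single vertex), then no element of $M$ is greater than an element of $X\setminus M$; that is, there are no $m\in M$ and $y\in X\setminus M$ with $y<m$.
   Context: A CPT representation of a poset $\mathbf{P}=(X,P)$ assigns to each $x\in X$ a path $W_x$ (vertex set) of a host tree $T$ so that $x<y$ iff $W_x\subsetneq W_y$. A set $M\subseteq X$ is a module if every $y\notin M$ is comparable to all elements of $M$ or incomparable to all of them; it is strong if it does not properly overlap any other module (for every module $M'$, $M\cap M'=\emptyset$ or $M\subseteq M'$ or $M'\subseteq M$). A trivial path is a path consisting of a single vertex. *)

(* Defs.v *)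
From mathcomp Require Import all_boot.
Set Implicit Arguments. Unset Strict Implicit. Unset Printing Implicit Defensive.

Definition strict_poset (X : finType) (lt : rel X) : Prop :=
  irreflexive lt /\ transitive lt.

Definition is_tree (T : finType) (e : rel T) : Prop :=
  [/\ symmetric e, irreflexive e, 0 < #|T|,
      (forall u v : T, exists p : seq T, path e u p /\ last u p = v)
    & (forall c : seq T, uniq c -> 2 < size c -> ~~ cycle e c)].

Definition is_path_set (T : finType) (e : rel T) (W : {set T}) : Prop :=
  exists (x : T) (p : seq T), [/\ uniq (x :: p), path e x p & W = [set v in x :: p]].

Definition CPT_rep (X : finType) (lt : rel X) (T : finType) (e : rel T)
    (W : X -> {set T}) : Prop :=
  [/\ is_tree e, (forall x, is_path_set e (W x))
    & (forall x y, lt x y <-> W x \proper W y)].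

Definition CPT_poset (X : finType) (lt : rel X) : Prop :=
  strict_poset lt /\
  exists (T : finType) (e : rel T) (W : X -> {set T}), CPT_rep lt e W.

Definition comparable (X : finType) (lt : rel X) (x y : X) : bool :=
  lt x y || lt y x.

Definition is_module (X : finType) (lt : rel X) (M : {set X}) : Prop :=
  forall y, y \notin M ->
    (forall m, m \in M -> comparable lt y m) \/
    (forall m, m \in M -> ~~ comparable lt y m).

Definition strong_module (X : finType) (lt : rel X) (M : {set X}) : Prop :=
  is_module lt M /\
  forall M' : {set X}, is_module lt M' ->
    [\/ M :&: M' = set0, M \subset M' | M' \subset M].

Definition trivial_path (T : finType) (W : {set T}) : Prop := #|W| = 1.

(* Main.v *)
Require Import Defs.
From mathcomp Require Import all_boot.

Theorem mainTheorem3 (X : finType) (lt : rel X) (M : {set X}) :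
  CPT_poset lt -> strong_module lt M ->
  (exists (T : finType) (e : rel T) (W : X -> {set T}),
      CPT_rep lt e W /\ exists2 x, x \in M & trivial_path (W x)) ->
  ~ (exists m y, [/\ m \in M, y \notin M & lt y m]).
Proof.
move=> [[irr tr] _] [modM strM] [T [e [W [[_ Wp Wlt] [x xM trx]]]]] [m [y [mM yM ym]]].
have asym : forall a b, lt a b -> lt b a -> False.
  by move=> a b ab ba; have := irr a; rewrite (tr _ _ _ ab ba).
have ycM : forall a, a \in M -> Defs.comparable lt y a.
  case: (modM y yM) => [//|H] a aM.
  by have := H m mM; rewrite /Defs.comparable ym.
have xy : lt x y.
  have := ycM x xM; rewrite /Defs.comparable => /orP [yx|//].
  have /proper_card := (proj1 (Wlt y x) yx); rewrite trx ltnS leqn0 => /eqP.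
  move/eqP; rewrite cards_eq0 => /eqP W0.
  have [v [p [_ _ Wv]]] := Wp y.
  by move: W0; rewrite Wv => /setP /(_ v); rewrite !inE eqxx.
pose N := [set z | if z \in M then lt z y
   else [forall a in M, (lt a y ==> lt a z) && (lt y a ==> lt z a)]].
have yN : y \in N.
  rewrite inE (negbTE yM); apply/forallP => a; apply/implyP => _.
  by apply/andP; split; apply/implyP => H //; case: (asym _ _ H H).
have xN : x \in N by rewrite inE xM.
have mN : m \notin N.
  by rewrite inE mM; apply/negP => my; apply: (asym _ _ my ym).
have modN : is_module lt N.
  move=> w wN.
  case wM: (w \in M).
    have yw : lt y w.
      have := ycM w wM; rewrite /Defs.comparable => /orP [//|wy].
      by move: wN; rewrite inE wM wy.
    left => z; rewrite inE; case zM: (z \in M) => /=; [move=> zy|move=> /forall_inP /(_ w wM)].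
      by rewrite /Defs.comparable (tr _ _ _ zy yw) orbT.
    by rewrite yw /= => /andP [_ zw]; rewrite /Defs.comparable zw orbT.
  case: (modM w (negbT wM)) => [Hall|Hnone].
    move: wN; rewrite inE wM /= => Hn.
    move: Hn; rewrite negb_forall_in => /exists_inP [a aM].
    rewrite negb_and !negb_imply => Ha.
    left => z; rewrite inE; case zM: (z \in M) => /=; [move=> _|move=> /forall_inP /(_ a aM) /andP [z1 z2]].
      exact: Hall.
    have := Hall a aM; rewrite /Defs.comparable.
    case/orP: Ha => /andP [h1 /negbTE h2].
      by rewrite h2 /= orbF => wa; rewrite (tr _ _ _ wa (implyP z1 h1)).
    by rewrite h2 /= => aw; rewrite (tr _ _ _ (implyP z2 h1) aw) orbT.
  right => z; rewrite inE; case zM: (z \in M) => /=; [move=> _|move=> /forall_inP Hz].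
    exact: Hnone.
  rewrite /Defs.comparable; apply/negP => /orP [wz|zw].
    have zm : lt z m by have /andP [_ /implyP h] := Hz m mM; apply: h.
    by have := Hnone m mM; rewrite /Defs.comparable (tr _ _ _ wz zm).
  have xz : lt x z by have /andP [/implyP h _] := Hz x xM; apply: h.
  by have := Hnone x xM; rewrite /Defs.comparable (tr _ _ _ xz zw) orbT.
case: (strM N modN) => [/setP /(_ x)|/subsetP /(_ m mM)|/subsetP /(_ y yN)].
- by rewrite in_setI in_set0 xM xN.
- by rewrite (negbTE mN).
- by rewrite (negbTE yM).
Qed.
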